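(* For all $P,Q\in\Gamma_n$, $$0\le M_{SA}(P\|Q)\le \tfrac14 \Delta(P\|Q)\qquad\text{and}\qquad 0\le \xi_{SA}(P\|Q)\le \tfrac14\xi_{\Delta}(P\|Q).$$
   Context: $\Gamma_n=\{P=(p_1,\dots,p_n): p_i>0,\ \sum_i p_i=1\}$, $n\ge2$. For $f:(0,\infty)\to\mathbb{R}$, $C_f(P\|Q)=\sum_{i=1}^n q_i f(p_i/q_i)$; for differentiable $f$, $E_f(P\|Q)=\sum_{i=1}^n (p_i-q_i) f'(p_i/q_i)$ and $\xi_f=E_f-C_f$. With $f_{SA}(x)=\sqrt{(x^2+1)/2}-\frac{x+1}{2}$ and $f_\Delta(x)=\frac{(x-1)^2}{x+1}$: $M_{SA}=C_{f_{SA}}=\sum_i\sqrt{(p_i^2+q_i^2)/2}-1$, $\Delta=C_{f_\Delta}=\sum_i\frac{(p_i-q_i)^2}{p_i+q_i}$, $\xi_{SA}=\xi_{f_{SA}}$, $\xi_\Delta=\xi_{f_\Delta}$. *)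

(* Defs.v *)
From Stdlib Require Import Reals.
From Coquelicot Require Import Coquelicot.
Open Scope R_scope.

Fixpoint rsum (n : nat) (g : nat -> R) : R :=
  match n with
  | O => 0
  | S m => rsum m g + g m
  end.

Definition Gamma (n : nat) (p : nat -> R) : Prop :=
  (forall i, (i < n)%nat -> 0 < p i) /\ rsum n p = 1.

Definition Cf (f : R -> R) (n : nat) (p q : nat -> R) : R :=
  rsum n (fun i => q i * f (p i / q i)).

Definition Ef (f : R -> R) (n : nat) (p q : nat -> R) : R :=
  rsum n (fun i => (p i - q i) * Derive f (p i / q i)).

Definition xi (f : R -> R) (n : nat) (p q : nat -> R) : R :=
  Ef f n p q - Cf f n p q.

Definition f_SA (x : R) : R := sqrt ((x ^ 2 + 1) / 2) - (x + 1) / 2.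
Definition f_Delta (x : R) : R := (x - 1) ^ 2 / (x + 1).

Definition M_SA := Cf f_SA.
Definition Delta_div := Cf f_Delta.
Definition xi_SA := xi f_SA.
Definition xi_Delta := xi f_Delta.

(* Main.v *)
Require Import Defs.
From Stdlib Require Import Reals Lra Psatz.
From Coquelicot Require Import Coquelicot.
Open Scope R_scope.

Lemma s_ge x s : s*s = (x^2+1)/2 -> 0 <= s -> (x+1)/2 <= s.
Proof.
intros. destruct (Rle_lt_dec ((x+1)/2) s); [assumption|]. exfalso.
assert (0 < ((x+1)/2 - s) * ((x+1)/2 + s)) by (apply Rmult_lt_0_compat; lra).
assert (0 <= (x-1)*(x-1)) by apply Rle_0_sqr.
assert (E: ((x+1)/2 - s) * ((x+1)/2 + s) = (x+1)*(x+1)/4 - s*s) by field.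
rewrite H in E.
assert (E2: (x+1)*(x+1)/4 - (x^2+1)/2 = -((x-1)*(x-1))/4) by field.
lra. Qed.

Lemma prod_id x s : s*s = (x^2+1)/2 -> (s - (x+1)/2) * (s + (x+1)/2) = (x-1)^2/4.
Proof.
intros H. replace ((s - (x+1)/2) * (s + (x+1)/2)) with (s*s - (x+1)^2/4) by field.
rewrite H. field.
Qed.

Lemma sq_nonneg y : 0 <= y^2.
Proof. replace (y^2) with (y*y) by ring. apply Rle_0_sqr. Qed.

Lemma fSA_bounds x : 0 < x -> 0 <= f_SA x /\ f_SA x <= /4 * f_Delta x.
Proof.
  intros Hx. unfold f_SA, f_Delta.
  assert (H1 : sqrt ((x^2+1)/2) * sqrt ((x^2+1)/2) = (x^2+1)/2)
    by (apply sqrt_sqrt; generalize (sq_nonneg x); lra).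
  assert (H2 : 0 <= sqrt ((x^2+1)/2)) by apply sqrt_pos.
  set (s := sqrt ((x^2+1)/2)) in *. clearbody s.
  assert (H3 := s_ge x s H1 H2).
  split. lra.
  assert (P := prod_id x s H1).
  assert (E : s - (x+1)/2 = (x-1)^2/4 * / (s + (x+1)/2)).
  { rewrite <- P. field. lra. }
  rewrite E.
  replace (/4 * ((x-1)^2/(x+1))) with ((x-1)^2/4 * /(x+1)) by (field; lra).
  apply Rmult_le_compat_l.
  - generalize (sq_nonneg (x-1)); lra.
  - apply Rinv_le_contravar; lra.
Qed.

Lemma D_SA x : Derive f_SA x = x / (2 * sqrt ((x^2+1)/2)) - /2.
Proof.
  apply is_derive_unique. unfold f_SA. auto_derive.
  - generalize (sq_nonneg x); lra.
  - replace ((x*(x*1)+1)*/2) with ((x^2+1)/2) by (unfold Rdiv; ring).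
    field. apply Rgt_not_eq. apply sqrt_lt_R0. generalize (sq_nonneg x); lra.
Qed.

Lemma D_Delta x : 0 < x -> Derive f_Delta x = (x-1)*(x+3)/(x+1)^2.
Proof.
  intros Hx. apply is_derive_unique. unfold f_Delta. auto_derive.
  - lra.
  - field. lra.
Qed.

Lemma g_bounds x : 0 < x ->
  0 <= (x-1) * Derive f_SA x - f_SA x /\
  (x-1) * Derive f_SA x - f_SA x <= /4 * ((x-1) * Derive f_Delta x - f_Delta x).
Proof.
  intros Hx. rewrite D_SA, D_Delta by lra. unfold f_SA, f_Delta.
  assert (H1 : sqrt ((x^2+1)/2) * sqrt ((x^2+1)/2) = (x^2+1)/2)
    by (apply sqrt_sqrt; generalize (sq_nonneg x); lra).
  assert (H2 : 0 < sqrt ((x^2+1)/2)) by (apply sqrt_lt_R0; generalize (sq_nonneg x); lra).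
  set (s := sqrt ((x^2+1)/2)) in *. clearbody s.
  assert (H3 := s_ge x s H1 (Rlt_le _ _ H2)).
  assert (P := prod_id x s H1).
  assert (G : (x-1) * (x / (2*s) - /2) - (s - (x+1)/2) = (s - (x+1)/2) / s).
  { apply (Rmult_eq_reg_r (2*s)); [|lra].
    replace ((x-1) * (x / (2*s) - /2) - (s - (x+1)/2)) with
      (((x-1)*x - (x-1)*s - 2*(s*s) + (x+1)*s) / (2*s)) by (field; lra).
    rewrite H1. field. lra. }
  rewrite G.
  assert (E : (s - (x+1)/2)/s = (x-1)^2/4 * / (s * (s + (x+1)/2))).
  { rewrite <- P. field. lra. }
  rewrite E.
  split.
  - apply Rmult_le_pos. generalize (sq_nonneg (x-1)); lra.
    left. apply Rinv_0_lt_compat. apply Rmult_lt_0_compat; lra.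
  - replace (/4 * ((x-1) * ((x-1)*(x+3)/(x+1)^2) - (x-1)^2/(x+1)))
      with ((x-1)^2/4 * / ((x+1)/2 * ((x+1)/2 + (x+1)/2))) by (field; lra).
    apply Rmult_le_compat_l.
    + generalize (sq_nonneg (x-1)); lra.
    + apply Rinv_le_contravar.
      * apply Rmult_lt_0_compat; lra.
      * apply Rmult_le_compat; lra.
Qed.

Lemma rsum_nonneg n f : (forall i, (i<n)%nat -> 0 <= f i) -> 0 <= rsum n f.
Proof. induction n; simpl; intros H. lra. 
  assert (0 <= f n) by (apply H; lia). assert (0 <= rsum n f) by (apply IHn; intros; apply H; lia). lra. Qed.

Lemma rsum_le4 n f g : (forall i, (i<n)%nat -> f i <= /4 * g i) -> rsum n f <= /4 * rsum n g.
Proof. induction n; simpl; intros H. lra.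
  assert (f n <= /4 * g n) by (apply H; lia). assert (rsum n f <= /4 * rsum n g) by (apply IHn; intros; apply H; lia). lra. Qed.

Lemma rsum_sub n f g : rsum n f - rsum n g = rsum n (fun i => f i - g i).
Proof. induction n; simpl. lra. rewrite <- IHn. lra. Qed.

Theorem proposition5p2 (n : nat) (p q : nat -> R) :
  (2 <= n)%nat -> Gamma n p -> Gamma n q ->
  (0 <= M_SA n p q /\ M_SA n p q <= / 4 * Delta_div n p q) /\
  (0 <= xi_SA n p q /\ xi_SA n p q <= / 4 * xi_Delta n p q).
Proof.
  intros _ [Hp _] [Hq _].
  assert (K : forall i, (i < n)%nat -> p i - q i = q i * (p i / q i - 1)).
  { intros i Hi. specialize (Hq i Hi). field. lra. }
  assert (X : forall i, (i < n)%nat -> 0 < p i / q i).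
  { intros i Hi. apply Rdiv_lt_0_compat; auto. }
  unfold M_SA, Delta_div, xi_SA, xi_Delta, xi, Ef, Cf.
  rewrite !rsum_sub.
  split; split.
  - apply rsum_nonneg. intros i Hi. apply Rmult_le_pos. left; auto.
    apply fSA_bounds; auto.
  - apply rsum_le4. intros i Hi. destruct (fSA_bounds _ (X i Hi)) as [_ B].
    assert (0 < q i) by auto. nra.
  - apply rsum_nonneg. intros i Hi. rewrite K by auto.
    destruct (g_bounds _ (X i Hi)) as [B _]. assert (0 < q i) by auto.
    replace (q i * (p i / q i - 1) * Derive f_SA (p i / q i) - q i * f_SA (p i / q i))
      with (q i * ((p i / q i - 1) * Derive f_SA (p i / q i) - f_SA (p i / q i))) by ring.
    apply Rmult_le_pos; lra.
  - apply rsum_le4. intros i Hi. rewrite K by auto.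
    destruct (g_bounds _ (X i Hi)) as [_ B]. assert (0 < q i) by auto.
    replace (q i * (p i / q i - 1) * Derive f_SA (p i / q i) - q i * f_SA (p i / q i))
      with (q i * ((p i / q i - 1) * Derive f_SA (p i / q i) - f_SA (p i / q i))) by ring.
    replace (q i * (p i / q i - 1) * Derive f_Delta (p i / q i) - q i * f_Delta (p i / q i))
      with (q i * ((p i / q i - 1) * Derive f_Delta (p i / q i) - f_Delta (p i / q i))) by ring.
    rewrite <- Rmult_assoc, (Rmult_comm (/4)), Rmult_assoc.
    apply Rmult_le_compat_l; lra.
Qed.
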